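(* If $\clubsuit$ holds then there is a family $\{S_\beta:\beta<\omega_2\}$ of stationary subsets of $\omega_1$ which is almost disjoint (i.e. $S_\beta\cap S_\gamma$ is countable for $\beta\neq\gamma$); hence $\mathrm{NS}_{\omega_1}$ is not saturated. Consequently, it is consistent that Galvin's property fails and $\mathrm{NS}_{\omega_1}$ is not saturated.
   Context: $\clubsuit$ (tiltan) at $\aleph_1$: there is a sequence $\langle T_\alpha:\alpha\in\lim(\omega_1)\rangle$ such that each $T_\alpha$ is a cofinal subset of $\alpha$, and for every unbounded $A\subseteq\omega_1$ the set $\{\alpha: T_\alpha\subseteq A\}$ is stationary. An ideal $\mathcal{I}$ over $\omega_1$ is saturated iff in every collection $\{S_\alpha:\alpha<\omega_2\}$ of $\mathcal{I}$-positive sets there are distinct $\alpha,\beta$ with $S_\alpha\cap S_\beta\notin\mathcal{I}$; $\mathrm{NS}_{\omega_1}$ is the nonstationary ideal on $\omega_1$. Galvin's property (at $\aleph_1$): every collection $\{C_\alpha:\alpha<\omega_2\}$ of club subsets of $\omega_1$ has a subcollection $\{C_{\alpha_\beta}:\beta<\omega_1\}$ (distinct indices) whose intersection is a club of $\omega_1$. *)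

(* Defs.v *)
From Stdlib Require Import Classical.

Set Implicit Arguments.

Section Ord.
Variables (O : Type) (lt : O -> O -> Prop).

Definition le (a b : O) : Prop := lt a b \/ a = b.

Definition is_wellorder : Prop :=
  (forall a, ~ lt a a) /\
  (forall a b c, lt a b -> lt b c -> lt a c) /\
  (forall a b, lt a b \/ a = b \/ lt b a) /\
  well_founded lt.

Definition countable (X : O -> Prop) : Prop :=
  exists f : O -> nat, forall a b, X a -> X b -> f a = f b -> a = b.

Definition is_limit (a : O) : Prop :=
  (exists b, lt b a) /\ (forall b, lt b a -> exists c, lt b c /\ lt c a).

Definition cofinal_in (T : O -> Prop) (a : O) : Prop :=
  (forall b, T b -> lt b a) /\ (forall b, lt b a -> exists c, T c /\ le b c).

Definition unbounded (A : O -> Prop) : Prop :=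
  forall b, exists c, A c /\ le b c.

Definition closed (C : O -> Prop) : Prop :=
  forall a, is_limit a ->
    (forall b, lt b a -> exists c, C c /\ lt b c /\ lt c a) -> C a.

Definition club (C : O -> Prop) : Prop := closed C /\ unbounded C.

Definition stationary (S : O -> Prop) : Prop :=
  forall C, club C -> exists a, C a /\ S a.

Definition clubsuit : Prop :=
  exists T : O -> O -> Prop,
    (forall a, is_limit a -> cofinal_in (T a) a) /\
    (forall A, unbounded A ->
       stationary (fun a => is_limit a /\ forall b, T a b -> A b)).

Definition is_omega1 : Prop :=
  is_wellorder /\
  (forall a, countable (fun b => lt b a)) /\
  ~ countable (fun _ => True).

End Ord.

Definition is_omega2_over (K O : Type) (ltK : K -> K -> Prop) : Prop :=
  is_wellorder ltK /\
  (forall k, exists f : K -> O,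
      forall x y, ltK x k -> ltK y k -> f x = f y -> x = y) /\
  ~ (exists f : K -> O, forall x y, f x = f y -> x = y).

Definition NS_saturated (O K : Type) (lt : O -> O -> Prop) : Prop :=
  forall S : K -> O -> Prop,
    (forall k, stationary lt (S k)) ->
    exists k1 k2, k1 <> k2 /\ stationary lt (fun a => S k1 a /\ S k2 a).

(* Main.v *)
Require Import Defs.
From Stdlib Require Import Classical ClassicalEpsilon FunctionalExtensionality Wellfounded Cantor.
From Stdlib Require Import PropExtensionality.
Set Implicit Arguments.

Lemma pair_inj a b c d : Cantor.to_nat (a, b) = Cantor.to_nat (c, d) -> a = c /\ b = d.
Proof.
  intro H. assert (E := f_equal Cantor.of_nat H).
  rewrite !Cantor.cancel_of_to in E. inversion E; auto.
Qed.

Lemma choice_fun {A B : Type} (Q : A -> Prop) (P : A -> B -> Prop) (b0 : B) :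
  (forall a, Q a -> exists b, P a b) -> exists f : A -> B, forall a, Q a -> P a (f a).
Proof.
  intro H.
  assert (H' : forall a, exists b, Q a -> P a b).
  { intro a. destruct (classic (Q a)) as [q|nq].
    - destruct (H a q) as [b Hb]. exists b; auto.
    - exists b0; intro; contradiction. }
  exists (fun a => proj1_sig (constructive_indefinite_description _ (H' a))).
  intros a q. exact (proj2_sig (constructive_indefinite_description _ (H' a)) q).
Qed.

Lemma cnt_sub {A : Type} (X Y : A -> Prop) :
  countable X -> (forall a, Y a -> X a) -> countable Y.
Proof.
  intros [f Hf] H. exists f. intros a b ya yb e. apply Hf; auto.
Qed.

Lemma cnt_image {A B : Type} (X : A -> Prop) (g : A -> B) :
  countable X -> countable (fun b => exists a, X a /\ b = g a).
Proof.
  intros [f Hf].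
  destruct (choice_fun (fun b => exists a, X a /\ b = g a)
     (fun b n => exists a, X a /\ b = g a /\ f a = n) 0) as [h Hh].
  { intros b [a [xa eb]]. exists (f a). exists a; auto. }
  exists h. intros b1 b2 i1 i2 e.
  destruct (Hh b1 i1) as [a1 [x1 [e1 f1]]].
  destruct (Hh b2 i2) as [a2 [x2 [e2 f2]]].
  subst. f_equal. apply Hf; auto. congruence.
Qed.

Lemma cnt_union {I A : Type} (Idx : I -> Prop) (B : I -> A -> Prop) :
  countable Idx -> (forall i, Idx i -> countable (B i)) ->
  countable (fun a => exists i, Idx i /\ B i a).
Proof.
  intros [fI HI] HB.
  destruct (choice_fun Idx (fun i (g : A -> nat) =>
     forall a b, B i a -> B i b -> g a = g b -> a = b) (fun _ => 0) HB) as [g Hg].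
  destruct (choice_fun (fun a => exists i, Idx i /\ B i a)
     (fun a n => exists i, Idx i /\ B i a /\ n = Cantor.to_nat (fI i, g i a)) 0) as [h Hh].
  { intros a [i [xi bi]]. eexists; exists i; eauto. }
  exists h. intros a1 a2 i1 i2 e.
  destruct (Hh a1 i1) as [j1 [x1 [b1 e1]]].
  destruct (Hh a2 i2) as [j2 [x2 [b2 e2]]].
  rewrite e1, e2 in e. apply pair_inj in e. destruct e as [ea eb].
  assert (j1 = j2) by (apply HI; auto). subst j2.
  apply (Hg j1 x1); auto.
Qed.

Lemma cnt_nat : countable (fun _ : nat => True).
Proof. exists (fun n => n). auto. Qed.

Lemma cnt_single {A : Type} (x : A) : countable (fun a => a = x).
Proof. exists (fun _ => 0). intros; subst; auto. Qed.

Lemma cnt_union2 {A : Type} (X Y : A -> Prop) :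
  countable X -> countable Y -> countable (fun a => X a \/ Y a).
Proof.
  intros hx hy.
  apply cnt_sub with (X := fun a => exists i : bool, True /\ (if i then X a else Y a)).
  - apply cnt_union.
    + exists (fun b : bool => if b then 0 else 1). intros [] []; simpl; auto; discriminate.
    + intros []; auto.
  - intros a [h|h]; [exists true | exists false]; auto.
Qed.

Section Main.
Variables (O : Type) (lt : O -> O -> Prop).
Hypothesis Hw : is_omega1 lt.

Lemma irr a : ~ lt a a. Proof. destruct Hw as [[h _] _]. apply h. Qed.
Lemma trans a b c : lt a b -> lt b c -> lt a c.
Proof. destruct Hw as [[_ [h _]] _]. apply h. Qed.
Lemma trich a b : lt a b \/ a = b \/ lt b a.
Proof. destruct Hw as [[_ [_ [h _]]] _]. apply h. Qed.
Lemma seg a : countable (fun b => lt b a).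
Proof. destruct Hw as [_ [h _]]. apply h. Qed.
Lemma unc : ~ countable (fun _ : O => True).
Proof. destruct Hw as [_ [_ h]]. apply h. Qed.

Lemma cnt_le b : countable (fun a => le lt a b).
Proof.
  apply cnt_sub with (X := fun a => lt a b \/ a = b).
  - apply cnt_union2; [apply seg | apply cnt_single].
  - intros a h; exact h.
Qed.

Lemma cnt_bounded (X : O -> Prop) : countable X -> exists b, forall x, X x -> lt x b.
Proof.
  intro hX. apply NNPP. intro H. apply unc.
  apply cnt_sub with (X := fun a => exists x, X x /\ le lt a x).
  - apply cnt_union; auto. intros; apply cnt_le.
  - intros a _. apply NNPP. intro H2. apply H. exists a. intros x xx.
    destruct (trich x a) as [h|[h|h]]; auto; exfalso; apply H2; exists x; split; auto;
      [right; auto | left; auto].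
Qed.

Lemma unc_unbounded (X : O -> Prop) : ~ countable X -> forall b, exists c, X c /\ le lt b c.
Proof.
  intros hX b. apply NNPP. intro H. apply hX.
  apply cnt_sub with (X := fun a => lt a b); [apply seg|].
  intros a xa. destruct (trich a b) as [h|[h|h]]; auto; exfalso; apply H; exists a;
    split; auto; unfold le; auto.
Qed.

End Main.

Lemma wf_build (K X : Type) (R : K -> K -> Prop) (wf : well_founded R) (x0 : X)
  (Good : K -> (K -> X) -> X -> Prop) :
  (forall k A, exists x, Good k A x) ->
  (forall k A B, (forall y, R y k -> A y = B y) -> forall x, Good k A x -> Good k B x) ->
  exists A : K -> X, forall k, Good k A (A k).
Proof.
  intros H1 H2.
  set (ext := fun k (rec : forall y, R y k -> X) (y : K) =>
         match excluded_middle_informative (R y k) with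
         | left p => rec y p | right _ => x0 end).
  set (step := fun k (rec : forall y, R y k -> X) =>
         proj1_sig (constructive_indefinite_description _ (H1 k (ext k rec)))).
  exists (Fix wf (fun _ => X) step).
  intro k.
  rewrite (Fix_eq wf (fun _ => X) step).
  2:{ intros x f g Hfg. assert (f = g).
      { apply functional_extensionality_dep; intro y.
        apply functional_extensionality_dep; intro p. apply Hfg. }
      subst; reflexivity. }
  unfold step at 1.
  apply (H2 k (ext k (fun y _ => Fix wf (fun _ => X) step y))).
  - intros y p. unfold ext. destruct (excluded_middle_informative (R y k)); tauto.
  - exact (proj2_sig (constructive_indefinite_description _ _)).
Qed.

Section Main2.
Variables (O : Type) (lt : O -> O -> Prop).
Hypothesis Hw : is_omega1 lt.

Lemma inhab : exists o : O, True.
Proof.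
  apply NNPP; intro H. apply (unc Hw). exists (fun _ => 0). intros a. exfalso; eauto.
Qed.

Lemma pigeon (X : O -> Prop) (h : O -> nat) :
  ~ countable X -> exists n, ~ countable (fun a => X a /\ h a = n).
Proof.
  intro hX. apply NNPP. intro H. apply hX.
  apply cnt_sub with (X := fun a => exists n, True /\ (X a /\ h a = n)).
  - apply cnt_union; [apply cnt_nat|]. intros n _. apply NNPP; intro H'. apply H; eauto.
  - intros a xa. exists (h a); auto.
Qed.

Lemma above_unc d : ~ countable (fun a => lt d a).
Proof.
  intro H. apply (unc Hw).
  apply cnt_sub with (X := fun a => le lt a d \/ lt d a).
  - apply cnt_union2; auto. apply cnt_le; auto.
  - intros a _. destruct (trich Hw a d) as [h|[h|h]]; unfold le; auto.
Qed.

Lemma disjoint_family : exists (Dl : O -> Prop) (D : O -> O -> Prop),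
  ~ countable Dl /\ (forall d, Dl d -> ~ countable (D d)) /\
  (forall d e a, Dl d -> Dl e -> D d a -> D e a -> d = e).
Proof.
  destruct (choice_fun (fun _ : O => True)
     (fun al (g : O -> nat) => forall x y, lt x al -> lt y al -> g x = g y -> x = y)
     (fun _ => 0)) as [g Hg].
  { intros al _. apply (seg Hw). }
  destruct (choice_fun (fun _ : O => True)
     (fun d n => ~ countable (fun al => lt d al /\ g al d = n)) 0) as [nd Hnd].
  { intros d _. apply pigeon. apply above_unc. }
  destruct (@pigeon (fun _ => True) nd (unc Hw)) as [N HN].
  exists (fun d => True /\ nd d = N), (fun d al => lt d al /\ g al d = nd d).
  split; [exact HN|]. split.
  - intros d _. apply Hnd; auto.
  - intros d e a [_ hd] [_ he] [l1 g1] [l2 g2].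
    apply (Hg a I); auto. congruence.
Qed.

Variables (K : Type) (ltK : K -> K -> Prop).
Hypothesis wfK : well_founded ltK.
Hypothesis trichK : forall a b, ltK a b \/ a = b \/ ltK b a.
Variable e : K -> K -> O.
Hypothesis He : forall k x y, ltK x k -> ltK y k -> e k x = e k y -> x = y.

Lemma ad_family : exists A : K -> O -> Prop,
  (forall k, unbounded lt (A k)) /\
  (forall k1 k2, k1 <> k2 -> countable (fun a => A k1 a /\ A k2 a)).
Proof.
  destruct inhab as [o0 _].
  destruct disjoint_family as [Dl [D [HDl [HD Hdisj]]]].
  set (good := fun k (A : K -> O -> Prop) xi a =>
         D xi a /\ lt xi a /\ forall y, ltK y k -> lt (e k y) xi -> ~ A y a).
  set (Good := fun k (A : K -> O -> Prop) (Z : O -> Prop) =>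
         exists pk : O -> O,
           (forall xi, Dl xi -> (exists a, good k A xi a) -> good k A xi (pk xi)) /\
           Z = (fun a => exists xi, Dl xi /\ good k A xi a /\ a = pk xi)).
  destruct (@wf_build K (O -> Prop) ltK wfK (fun _ => False) Good) as [A HA].
  - intros k A.
    destruct (choice_fun (fun xi => Dl xi /\ exists a, good k A xi a)
       (fun xi a => good k A xi a) o0) as [pk Hpk].
    { intros xi [_ h]; exact h. }
    eexists. exists pk. split; [|reflexivity]. intros xi h1 h2. apply Hpk; auto.
  - intros k A B HAB Z [pk [H1 H2]].
    assert (Eg : forall xi a, good k A xi a <-> good k B xi a).
    { intros xi a. unfold good. split; intros [h1 [h2 h3]]; repeat split; auto;
        intros y hy; [rewrite <- HAB | rewrite HAB]; auto. }
    exists pk. split.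
    + intros xi hx [a ha]. apply Eg. apply H1; auto. exists a; apply Eg; auto.
    + rewrite H2. apply functional_extensionality; intro a.
      apply propositional_extensionality. split; intros [xi [h1 [h2 h3]]];
        exists xi; split; auto; split; auto;
        [exact (proj1 (Eg _ _) h2) | exact (proj2 (Eg _ _) h2)].
  - assert (Mem : forall k a, A k a -> exists xi, Dl xi /\ good k A xi a).
    { intros k a h. destruct (HA k) as [pk [_ E]]. rewrite E in h.
      destruct h as [xi [h1 [h2 _]]]; eauto. }
    assert (Cb : forall y xi, Dl xi -> countable (fun a => A y a /\ D xi a)).
    { intros y xi hxi. destruct (HA y) as [pk [_ E]].
      apply cnt_sub with (X := fun a => a = pk xi); [apply cnt_single|].
      intros a [ha hd]. rewrite E in ha. destruct ha as [xi' [h1 [h2 h3]]].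
      assert (xi' = xi) by (apply (Hdisj xi' xi a); auto; apply h2). subst; auto. }
    assert (P1 : forall k xi, Dl xi -> exists a, good k A xi a).
    { intros k xi hxi. apply NNPP; intro H. apply (HD xi hxi).
      apply cnt_sub with (X := fun a => le lt a xi \/
          exists y, (ltK y k /\ lt (e k y) xi) /\ (A y a /\ D xi a)).
      - apply cnt_union2; [apply cnt_le; auto|]. apply cnt_union.
        + destruct (seg Hw xi) as [f Hf]. exists (fun y => f (e k y)).
          intros y1 y2 [a1 b1] [a2 b2] h. apply (@He k); auto.
        + intros y _. apply Cb; auto.
      - intros a ha. destruct (trich Hw xi a) as [h|[h|h]];
          [| left; right; auto | left; left; auto].
        right. apply NNPP; intro H2. apply H. exists a. split; auto. split; auto.
        intros y hy hl hA. apply H2. exists y; auto. }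
    exists A. split.
    + intros k b. destruct (unc_unbounded Hw HDl b) as [xi [hxi hle]].
      destruct (HA k) as [pk [Hpk E]].
      assert (G := Hpk xi hxi (P1 k xi hxi)).
      exists (pk xi). split.
      * rewrite E. exists xi; auto.
      * destruct G as [_ [hl _]]. left. destruct hle as [h|h]; [eapply trans; eauto|subst; auto].
    + assert (Ord : forall k1 k2, ltK k2 k1 -> countable (fun a => A k1 a /\ A k2 a)).
      { intros k1 k2 hk. destruct (HA k1) as [pk [_ E]].
        apply cnt_sub with (X := fun a => exists xi, le lt xi (e k1 k2) /\ a = pk xi).
        - apply cnt_image. apply cnt_le; auto.
        - intros a [h1 h2]. rewrite E in h1. destruct h1 as [xi [_ [[_ [_ hg]] ea]]].
          exists xi. split; auto.
          destruct (trich Hw xi (e k1 k2)) as [h|[h|h]]; unfold le; auto.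
          exfalso. exact (hg k2 hk h h2). }
      intros k1 k2 hne. destruct (trichK k1 k2) as [h|[h|h]]; [| contradiction | auto].
      apply cnt_sub with (X := fun a => A k2 a /\ A k1 a); [auto|].
      intros a [x y]; auto.
Qed.
End Main2.

Unset Implicit Arguments.

Theorem mainTheorem8 (O : Type) (lt : O -> O -> Prop) (K : Type) (ltK : K -> K -> Prop) :
  is_omega1 lt -> is_omega2_over O ltK ->
  clubsuit lt ->
  (exists S : K -> O -> Prop,
      (forall b, stationary lt (S b)) /\
      (forall b c, b <> c -> countable (fun a => S b a /\ S c a)))
  /\ ~ NS_saturated K lt.
Proof.
  intros Hw [[_ [_ [trK wfK]]] [HK _]] [T [HT1 HT2]].
  destruct (inhab Hw) as [o0 _].
  destruct (choice_fun (fun _ : K => True)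
     (fun k (f : K -> O) => forall x y, ltK x k -> ltK y k -> f x = f y -> x = y)
     (fun _ => o0)) as [e He].
  { intros k _. apply HK. }
  assert (He' : forall k x y, ltK x k -> ltK y k -> e k x = e k y -> x = y).
  { intros k; apply (He k I). }
  destruct (@ad_family O lt Hw K ltK wfK trK e He') as [A [HAu HAc]].
  set (S := fun k al => is_limit lt al /\ forall b0, T al b0 -> A k b0).
  assert (SC : forall k1 k2, k1 <> k2 -> countable (fun a => S k1 a /\ S k2 a)).
  { intros k1 k2 hne. destruct (cnt_bounded Hw (HAc k1 k2 hne)) as [beta Hb].
    apply cnt_sub with (X := fun a => le lt a beta); [apply cnt_le; auto|].
    intros a [[la ta1] [_ ta2]].
    destruct (trich Hw a beta) as [h|[h|h]]; unfold le; auto.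
    exfalso. destruct (HT1 a la) as [_ cof]. destruct (cof beta h) as [c [tc lec]].
    assert (hc : lt c beta) by (apply Hb; auto).
    destruct lec as [l|l].
    - apply (irr Hw beta). eapply trans; eauto.
    - subst. apply (irr Hw c); auto. }
  split.
  - exists S. split; [intro b; apply HT2; apply HAu | exact SC].
  - intro Hs. destruct (Hs S (fun b => HT2 _ (HAu b))) as [k1 [k2 [hne hst]]].
    destruct (cnt_bounded Hw (SC k1 k2 hne)) as [beta Hb].
    destruct (hst (fun a => lt beta a)) as [a [ha hi]].
    + split.
      * intros a la hc. destruct la as [[b hb] _].
        destruct (hc b hb) as [c [hc1 [_ hc2]]]. eapply trans; eauto.
      * intro b. destruct (unc_unbounded Hw (above_unc Hw beta) b) as [c [h1 h2]]. eauto.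
    + apply (irr Hw a). eapply trans; eauto.
Qed.
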